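(* Let $T$ be a CPTP map and $\mathcal{H}_S$ an invariant subspace with orthogonal projection $\Pi_S$. Then $\mathcal{H}_S$ is GAS if and only if the sequence of subspaces $\mathrm{supp}(T^{*n}(\Pi_S))$, $n=0,1,2,\dots$, is strictly increasing until it equals $\mathcal{H}$ (i.e. there is $N$ such that $\mathrm{supp}(T^{*n}(\Pi_S))\subsetneq\mathrm{supp}(T^{*(n+1)}(\Pi_S))$ for $n<N$ and $\mathrm{supp}(T^{*N}(\Pi_S))=\mathcal{H}$).
   Context: $\mathcal{H}$ is a finite-dimensional complex Hilbert space; $T$ is CPTP: $T(\rho)=\sum_kM_k\rho M_k^\dagger$, $\sum_kM_k^\dagger M_k=I$, with dual $T^*(A)=\sum_kM_k^\dagger AM_k$, $T^{*0}=\mathrm{id}$. $\mathrm{supp}(X)=(\ker X)^\perp$. $\mathcal{H}_S$ is invariant if $\rho\ge0$, $\mathrm{supp}(\rho)\subseteq\mathcal{H}_S$ implies $\mathrm{supp}(T(\rho))\subseteq\mathcal{H}_S$; an invariant $\mathcal{H}_S$ is GAS if $\lim_n\|T^n(\rho)-\Pi_ST^n(\rho)\Pi_S\|=0$ for every density operator $\rho$. *)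

(* Defs.v *)
(* The finite-dimensional complex Hilbert space H is C^n
   (column vectors), where C is an Archimedean algebraically closed numeric
   field (e.g. algC).  Subspaces of H are represented (mxalgebra style) by the
   row space of a matrix whose rows are the transposes of spanning vectors. *)
From HB Require Import structures.
From mathcomp Require Import all_boot all_order all_algebra.
Set Implicit Arguments. Unset Strict Implicit. Unset Printing Implicit Defensive.
Import Order.TTheory GRing.Theory Num.Theory.
Local Open Scope ring_scope.

Definition adjmx (C : archiClosedFieldType) (m p : nat) (A : 'M[C]_(m, p))
  : 'M[C]_(p, m) := (map_mx Num.conj A)^T.

Definition psd (C : archiClosedFieldType) (n : nat) (A : 'M[C]_n) : Prop :=
  adjmx A = A /\ forall v : 'cV[C]_n, 0 <= (adjmx v *m A *m v) 0 0.

Definition density (C : archiClosedFieldType) (n : nat) (rho : 'M[C]_n) : Prop :=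
  psd rho /\ \tr rho = 1.

(* ker X = {v | X v = 0}, as the row space of the transposes v^T *)
Definition kerS (C : archiClosedFieldType) (n : nat) (X : 'M[C]_n) : 'M[C]_n :=
  kermx X^T.

(* orthogonal complement of the subspace (row space) U w.r.t. <u,w> = sum u_i conj(w_i) *)
Definition perp (C : archiClosedFieldType) (n : nat) (U : 'M[C]_n) : 'M[C]_n :=
  kermx (map_mx Num.conj U)^T.

Definition supp (C : archiClosedFieldType) (n : nat) (X : 'M[C]_n) : 'M[C]_n :=
  perp (kerS X).

Definition kraus_op (C : archiClosedFieldType) (n k : nat) (M : 'I_k -> 'M[C]_n)
  (rho : 'M[C]_n) : 'M[C]_n := \sum_(i < k) M i *m rho *m adjmx (M i).

Definition kraus_dual (C : archiClosedFieldType) (n k : nat) (M : 'I_k -> 'M[C]_n)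
  (A : 'M[C]_n) : 'M[C]_n := \sum_(i < k) adjmx (M i) *m A *m M i.

(* trace preservation condition sum_k M_k^dagger M_k = I (complete positivity
   is automatic for a Kraus form) *)
Definition cptp (C : archiClosedFieldType) (n k : nat) (M : 'I_k -> 'M[C]_n) : Prop :=
  \sum_(i < k) adjmx (M i) *m M i = 1%:M.

Definition orth_proj (C : archiClosedFieldType) (n : nat) (S P : 'M[C]_n) : Prop :=
  P *m P = P /\ adjmx P = P /\ (P^T == S)%MS.

Definition invariant_subspace (C : archiClosedFieldType) (n k : nat) (M : 'I_k -> 'M[C]_n)
  (S : 'M[C]_n) : Prop :=
  forall rho : 'M[C]_n, psd rho -> (supp rho <= S)%MS ->
    (supp (kraus_op M rho) <= S)%MS.

Definition hsnorm (C : archiClosedFieldType) (n : nat) (A : 'M[C]_n) : C :=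
  sqrtC (\sum_(i < n) \sum_(j < n) `|A i j| ^+ 2).

Definition GAS (C : archiClosedFieldType) (n k : nat) (M : 'I_k -> 'M[C]_n)
  (P : 'M[C]_n) : Prop :=
  forall rho : 'M[C]_n, density rho ->
    forall eps : C, 0 < eps -> exists N : nat, forall m : nat, (N <= m)%N ->
      hsnorm (iter m (kraus_op M) rho - P *m iter m (kraus_op M) rho *m P) < eps.

(* Main.v *)
Require Import Defs.
From HB Require Import structures.
From mathcomp Require Import all_boot all_order all_algebra.
Set Implicit Arguments. Unset Strict Implicit. Unset Printing Implicit Defensive.
Import Order.TTheory GRing.Theory Num.Theory.
Local Open Scope ring_scope.

Section Basic.
Variable C : archiClosedFieldType.

Lemma adjmxij m p (A : 'M[C]_(m,p)) i j : adjmx A i j = (A j i)^*.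
Proof. by rewrite /adjmx !mxE. Qed.

Lemma adjmxK m p (A : 'M[C]_(m,p)) : adjmx (adjmx A) = A.
Proof. by apply/matrixP=> i j; rewrite !adjmxij conjCK. Qed.

Lemma adjmxM m p r (A : 'M[C]_(m,p)) (B : 'M[C]_(p,r)) :
  adjmx (A *m B) = adjmx B *m adjmx A.
Proof. by rewrite /adjmx map_mxM trmx_mul. Qed.

Lemma adjmxD m p (A B : 'M[C]_(m,p)) : adjmx (A + B) = adjmx A + adjmx B.
Proof. by apply/matrixP=> i j; rewrite !mxE rmorphD. Qed.

Lemma adjmxN m p (A : 'M[C]_(m,p)) : adjmx (- A) = - adjmx A.
Proof. by apply/matrixP=> i j; rewrite !mxE rmorphN. Qed.

Lemma adjmxB m p (A B : 'M[C]_(m,p)) : adjmx (A - B) = adjmx A - adjmx B.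
Proof. by rewrite adjmxD adjmxN. Qed.

Lemma adjmxZ m p a (A : 'M[C]_(m,p)) : adjmx (a *: A) = a^* *: adjmx A.
Proof. by apply/matrixP=> i j; rewrite !mxE rmorphM. Qed.

Lemma adjmx_sum m p I (r : seq I) (F : I -> 'M[C]_(m,p)) :
  adjmx (\sum_(i <- r) F i) = \sum_(i <- r) adjmx (F i).
Proof. by apply/matrixP=> i j; rewrite !mxE !summxE rmorph_sum; apply: eq_bigr=> l _; rewrite !mxE. Qed.

Lemma adjmx1 m : adjmx (1%:M : 'M[C]_m) = 1%:M.
Proof. by apply/matrixP=> i j; rewrite !mxE eq_sym; case: (_ == _); rewrite ?conjC1 ?conjC0. Qed.

Lemma adjmx0 m p : adjmx (0 : 'M[C]_(m,p)) = 0.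
Proof. by apply/matrixP=> i j; rewrite !mxE conjC0. Qed.

Lemma adjmx_delta m p (i : 'I_m) (j : 'I_p) : adjmx (delta_mx i j : 'M[C]_(m,p)) = delta_mx j i.
Proof. apply/matrixP=> a b; rewrite !mxE; case: (_ == _); case: (_ == _); by rewrite /= ?conjC1 ?conjC0. Qed.

Definition qf n (A : 'M[C]_n) (v : 'cV[C]_n) : C := (adjmx v *m A *m v) 0 0.
Definition nrm n (v : 'cV[C]_n) : C := (adjmx v *m v) 0 0.

Lemma nrmE n (v : 'cV[C]_n) : nrm v = \sum_i `|v i 0| ^+ 2.
Proof. rewrite /nrm !mxE; apply: eq_bigr => i _; by rewrite adjmxij normCKC. Qed.

Lemma nrm_ge0 n (v : 'cV[C]_n) : 0 <= nrm v.
Proof. by rewrite nrmE; apply: sumr_ge0 => i _; rewrite exprn_ge0. Qed.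

Lemma nrm_eq0 n (v : 'cV[C]_n) : nrm v = 0 -> v = 0.
Proof.
rewrite nrmE => /eqP; rewrite psumr_eq0 => [/allP H|i _]; last by rewrite exprn_ge0.
apply/matrixP=> i j; rewrite ord1 mxE; have := H i (mem_index_enum i).
by rewrite implyTb sqrf_eq0 normr_eq0 => /eqP.
Qed.

Lemma qf1 n (v : 'cV[C]_n) : qf 1%:M v = nrm v.
Proof. by rewrite /qf mulmx1. Qed.

Lemma qfD n (A B : 'M[C]_n) v : qf (A + B) v = qf A v + qf B v.
Proof. by rewrite /qf mulmxDr mulmxDl mxE. Qed.
Lemma qfN n (A : 'M[C]_n) v : qf (- A) v = - qf A v.
Proof. by rewrite /qf mulmxN mulNmx mxE. Qed.
Lemma qfB n (A B : 'M[C]_n) v : qf (A - B) v = qf A v - qf B v.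
Proof. by rewrite qfD qfN. Qed.
Lemma qfZ n a (A : 'M[C]_n) v : qf (a *: A) v = a * qf A v.
Proof. by rewrite /qf -scalemxAr -scalemxAl mxE. Qed.
Lemma qf_sum n I (r : seq I) (F : I -> 'M[C]_n) v :
  qf (\sum_(i <- r) F i) v = \sum_(i <- r) qf (F i) v.
Proof. by rewrite /qf mulmx_sumr mulmx_suml summxE. Qed.
Lemma qfM n (A W : 'M[C]_n) v : qf (adjmx W *m A *m W) v = qf A (W *m v).
Proof. by rewrite /qf adjmxM !mulmxA. Qed.

End Basic.


Section Spec.
Variable C : archiClosedFieldType.

Lemma adjmx_tC m p (A : 'M[C]_(m,p)) : adjmx A = map_mx Num.conj (A ^T).
Proof. by rewrite /adjmx map_trmx. Qed.

Lemma herm_decomp n (A : 'M[C]_n) : adjmx A = A ->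
  exists W (d : 'rV[C]_n), W *m adjmx W = 1%:M /\ adjmx W *m W = 1%:M /\
     A = adjmx W *m diag_mx d *m W.
Proof.
move=> hA.
have Ah : A \is hermsymmx.
  by apply/is_hermitianmxP; rewrite expr0 scale1r -adjmx_tC hA.
have /orthomx_spectralP eqA := hermitian_normalmx Ah.
have Wu := spectral_unitarymx A.
exists (spectralmx A), (spectral_diag A).
have h1 : spectralmx A *m adjmx (spectralmx A) = 1%:M.
  by rewrite adjmx_tC; apply/unitarymxP.
split=> //; split; first by apply: mulmx1C.
by rewrite {1}eqA invmx_unitary // adjmx_tC.
Qed.

End Spec.


Section Spec2.
Variable C : archiClosedFieldType.

Lemma qf_diag n (d : 'rV[C]_n) u : qf (diag_mx d) u = \sum_j d 0 j * `|u j 0| ^+ 2.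
Proof.
rewrite /qf mul_mx_diag !mxE; apply: eq_bigr => j _.
by rewrite !mxE normCKC mulrAC mulrC.
Qed.

Lemma nrmW n (W : 'M[C]_n) v : adjmx W *m W = 1%:M -> nrm (W *m v) = nrm v.
Proof. by move=> h; rewrite /nrm adjmxM -mulmxA (mulmxA _ W) h mul1mx. Qed.

Lemma psd_decomp n (A : 'M[C]_n) : psd A ->
  exists W (d : 'rV[C]_n), W *m adjmx W = 1%:M /\ adjmx W *m W = 1%:M /\
     A = adjmx W *m diag_mx d *m W /\ forall j, 0 <= d 0 j.
Proof.
case=> hA hq; have [W [d [h1 [h2 h3]]]] := herm_decomp hA.
exists W, d; do 3!split => //.
move=> j; have := hq (adjmx W *m delta_mx j 0).
rewrite -[X in 0 <= X]/(qf A _) h3 qfM mulmxA h1 mul1mx qf_diag (bigD1 j) //= big1 ?addr0.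
  by rewrite mxE !eqxx normr1 expr1n mulr1.
by move=> i /negbTE hij; rewrite mxE hij normr0 expr0n mulr0.
Qed.

Lemma qf_psd n (A : 'M[C]_n) v : psd A -> 0 <= qf A v.
Proof. by case=> _; apply. Qed.

End Spec2.


Section Spec3.
Variable C : archiClosedFieldType.

Lemma delta_entry n (Y : 'M[C]_n) i j : ((delta_mx 0 i : 'rV[C]_n) *m Y *m (delta_mx j 0 : 'cV[C]_n)) 0 0 = Y i j.
Proof. by rewrite -rowE -colE !mxE. Qed.

Lemma qf_col n (X W : 'M[C]_n) j : qf X (W *m delta_mx j 0) = (adjmx W *m X *m W) j j.
Proof. by rewrite -qfM /qf adjmx_delta delta_entry. Qed.

Lemma trace_col n (X W : 'M[C]_n) : \tr (adjmx W *m X *m W) = \sum_j qf X (W *m delta_mx j 0).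
Proof. by apply: eq_bigr => j _; rewrite qf_col. Qed.

Lemma trace_dec n (W : 'M[C]_n) d : W *m adjmx W = 1%:M ->
  \tr (adjmx W *m diag_mx d *m W) = \sum_j d 0 j.
Proof. by move=> h; rewrite mxtrace_mulC mulmxA h mul1mx mxtrace_diag. Qed.

Lemma qf_dec n (W : 'M[C]_n) d v :
  qf (adjmx W *m diag_mx d *m W) v = \sum_j d 0 j * `|(W *m v) j 0| ^+ 2.
Proof. by rewrite qfM qf_diag. Qed.

Lemma psd_ker n (A : 'M[C]_n) v : psd A -> qf A v = 0 -> A *m v = 0.
Proof.
move=> hA; have [W [d [h1 [h2 [h3 hd]]]]] := psd_decomp hA.
rewrite {1}h3 qf_dec => /eqP; rewrite psumr_eq0 => [/allP H|j _]; last first.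
  by rewrite mulr_ge0 ?exprn_ge0.
have H0 : diag_mx d *m (W *m v) = 0.
  apply/matrixP=> i j; rewrite ord1 mul_diag_mx mxE [RHS]mxE.
  have := H i (mem_index_enum i); rewrite implyTb mulf_eq0 sqrf_eq0 normr_eq0.
  by case/orP=> /eqP ->; rewrite ?mul0r ?mulr0.
by rewrite h3 -!mulmxA H0 mulmx0.
Qed.

Lemma psd_lower n (A : 'M[C]_n) : psd A -> A \in unitmx ->
  exists c, 0 < c /\ forall v, c * nrm v <= qf A v.
Proof.
move=> hA Au; have [W [d [h1 [h2 [h3 hd]]]]] := psd_decomp hA.
have dpos j : 0 < d 0 j.
  rewrite lt_def hd andbT; apply/eqP => dj0.
  have e0 : A *m (adjmx W *m (delta_mx j 0 : 'cV[C]_n)) = 0.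
    rewrite h3 -!mulmxA (mulmxA W) h1 mul1mx mul_diag_mx.
    have -> : \matrix_(i, k) (d 0 i * (delta_mx j 0 : 'cV[C]_n) i k) = 0.
      apply/matrixP=> a b; rewrite !mxE.
      by case: eqP => [->|] /=; rewrite ?dj0 ?mul0r ?mulr0.
    by rewrite mulmx0.
  have : delta_mx j 0 = (0 : 'cV[C]_n).
    by rewrite -[delta_mx j 0]mul1mx -h1 -mulmxA -[adjmx W *m _](mulKmx Au) e0 !mulmx0.
  by move/matrixP/(_ j 0); rewrite !mxE !eqxx => /eqP; rewrite oner_eq0.
pose c := (1 + \sum_j (d 0 j)^-1)^-1.
have sge0 : 0 <= \sum_j (d 0 j)^-1 by apply: sumr_ge0 => j _; rewrite invr_ge0 ltW.
have cpos : 0 < c by rewrite invr_gt0 ltr_wpDr.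
exists c; split => // v.
rewrite h3 qf_dec -(nrmW v h2) nrmE mulr_sumr; apply: ler_sum => j _.
rewrite ler_wpM2r ?exprn_ge0 //.
rewrite -[d 0 j]invrK lef_pV2 ?posrE ?invr_gt0 //.
rewrite (bigD1 j) //= addrCA lerDl addr_ge0 //.
  by apply: sumr_ge0 => i _; rewrite invr_ge0 ltW.
by rewrite ltr_wpDr.
Qed.

Lemma psd_upper2 n (A : 'M[C]_n) v : psd A -> nrm (A *m v) <= \tr A * qf A v.
Proof.
move=> hA; have [W [d [h1 [h2 [h3 hd]]]]] := psd_decomp hA.
have h4 : adjmx (adjmx W) *m adjmx W = 1%:M by rewrite adjmxK.
rewrite {1}h3 -!mulmxA nrmW // {1 2}h3 trace_dec // qf_dec nrmE mulr_sumr.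
apply: ler_sum => j _; rewrite mul_diag_mx mxE normrM exprMn.
have -> : `|d 0 j| = d 0 j by rewrite ger0_norm.
rewrite expr2 -mulrA ler_wpM2r ?mulr_ge0 ?exprn_ge0 //.
by rewrite (bigD1 j) //= lerDl; apply: sumr_ge0.
Qed.

Lemma psd_tr n (A X : 'M[C]_n) b : psd A -> (forall v, qf X v <= b * nrm v) ->
  \tr (X *m A) <= b * \tr A.
Proof.
move=> hA hX; have [W [d [h1 [h2 [h3 hd]]]]] := psd_decomp hA.
rewrite {2}h3 trace_dec // h3 !mulmxA mxtrace_mulC !mulmxA mxtrace_mulC.
rewrite mul_diag_mx /mxtrace mulr_sumr; apply: ler_sum => j _.
rewrite mxE mulrC ler_wpM2r //.
have := hX (adjmx W *m (delta_mx j 0 : 'cV[C]_n)); rewrite qf_col adjmxK nrmW ?adjmxK //.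
have -> : nrm (delta_mx j 0 : 'cV[C]_n) = 1.
  by rewrite nrmE (bigD1 j) //= big1 ?addr0 => [|i /negbTE hij]; rewrite mxE ?eqxx ?hij ?normr1 ?normr0 ?expr1n // expr0n.
by rewrite mulr1 -mulmxA.
Qed.

End Spec3.


Section Supp.
Variable C : archiClosedFieldType.
Local Notation orth U := (orthomx Num.conj (mx_of_hermitian (hermitian1mx _)) U).

Lemma perpE n (U : 'M[C]_n) : perp U = orth U.
Proof. by rewrite /perp /orthomx /= mul1mx map_trmx. Qed.

Lemma suppE n (X : 'M[C]_n) : (supp X :=: map_mx Num.conj X)%MS.
Proof.
rewrite /supp; have -> : kerS X = perp (map_mx Num.conj X).
  by rewrite /kerS /perp -map_mx_comp (map_mx_id (@conjCK _)).
by rewrite !perpE; apply: ortho_id.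
Qed.

Lemma suppH n (X : 'M[C]_n) : adjmx X = X -> (supp X :=: X^T)%MS.
Proof.
move=> h; have E : map_mx Num.conj X = X^T by rewrite -[X in X^T]h /adjmx trmxK.
by rewrite -E; exact: suppE.
Qed.

Lemma rank_supp n (X : 'M[C]_n) : \rank (supp X) = \rank X.
Proof. by rewrite suppE mxrank_map. Qed.

Lemma supp_le n (A B : 'M[C]_n) :
  (forall v : 'cV[C]_n, B *m v = 0 -> A *m v = 0) -> (supp A <= supp B)%MS.
Proof.
move=> H; rewrite /supp !perpE submx_ortho /kerS.
apply/row_subP => i; rewrite sub_kermx; apply/eqP.
have := H (row i (kermx B^T))^T.
have h0 : row i (kermx B^T) *m B^T = 0.
  by apply/eqP; rewrite -sub_kermx row_sub.
move=> /(_ _)/(congr1 trmx); rewrite trmx_mul trmxK trmx0; apply.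
by rewrite -[B *m _]trmxK trmx_mul trmxK h0 trmx0.
Qed.

Lemma ker_le n (A B : 'M[C]_n) (v : 'cV[C]_n) :
  (supp A <= supp B)%MS -> B *m v = 0 -> A *m v = 0.
Proof.
rewrite /supp !perpE submx_ortho /kerS => H Bv.
have : (v^T <= kermx B^T)%MS by rewrite sub_kermx -trmx_mul Bv trmx0.
move/(submx_trans)/(_ H); rewrite sub_kermx -trmx_mul => /eqP/(congr1 trmx).
by rewrite trmxK trmx0.
Qed.

Lemma full_supp n (X : 'M[C]_n) : (supp X == 1%:M)%MS = (\rank X == n).
Proof.
apply/idP/idP.
  by move/eqmx_rank; rewrite rank_supp mxrank1 => ->.
move/eqP=> h; rewrite -rank_supp in h.
by rewrite /eqmx submx1 /= -(mxrank_leqif_sup (submx1 _)) h mxrank1.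
Qed.

Lemma sub_proj n (U P : 'M[C]_n) : P *m P = P -> (U <= P)%MS = (U *m P == U).
Proof.
move=> hP; apply/idP/idP.
  by case/submxP=> D ->; rewrite -mulmxA hP.
by move/eqP=> <-; apply: submxMl.
Qed.

End Supp.


Section Misc.
Variable C : archiClosedFieldType.

Lemma geom_small (c e : C) : 0 < c -> c <= 1 -> 0 < e ->
  exists k : nat, (1 - c) ^+ k < e.
Proof.
move=> c0 c1 e0; set d := 1 - c.
have d0 : 0 <= d by rewrite subr_ge0.
have d1 : d <= 1 by rewrite lerBlDr lerDl ltW.
have key k : k%:R * c * d ^+ k <= 1.
  have E := subrXX 1 d k.
  have e1 : 1 - d = c by rewrite /d opprB addrC subrK.
  rewrite expr1n e1 in E. have : c * (k%:R * d ^+ k) <= 1 - d ^+ k.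
    rewrite E; apply: ler_wpM2l; first exact: ltW.
    rewrite mulr_natl.
    have -> : d ^+ k *+ k = \sum_(i < k) d ^+ k by rewrite sumr_const card_ord.
    apply: ler_sum => i _; rewrite expr1n mul1r; apply: ler_wiXn2l => //; exact: ltnW.
  rewrite mulrA (mulrC c) => /le_trans; apply.
  by rewrite lerBlDr lerDl exprn_ge0.
have hb : 0 <= (c * e)^-1 by rewrite invr_ge0 ltW // mulr_gt0.
exists (Num.bound (c * e)^-1).
set k := Num.bound _ in hb *.
have hk := archi_boundP hb.
have dr : d ^+ k \is Num.real by rewrite ger0_real ?exprn_ge0.
rewrite (real_ltNge dr (gtr0_real e0)); apply/negP => hed.
have h1 : k%:R * c * e <= 1.
  apply: le_trans (key k); apply: ler_wpM2l; last exact: hed.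
  by apply: mulr_ge0 => //; apply: ltW.
have h2 : 1 < k%:R * c * e.
  by rewrite -mulrA -ltr_pdivrMr ?mulr_gt0 // div1r.
by have := lt_le_trans h2 h1; rewrite ltxx.
Qed.

Definition hs2 n (X : 'M[C]_n) := \tr (adjmx X *m X).

Lemma hs2E n (X : 'M[C]_n) : hs2 X = \sum_(i < n) \sum_(j < n) `|X i j| ^+ 2.
Proof.
rewrite /hs2 /mxtrace exchange_big; apply: eq_bigr => j _; rewrite mxE.
by apply: eq_bigr => i _; rewrite adjmxij normCKC.
Qed.

Lemma hsnormE n (X : 'M[C]_n) : hsnorm X ^+ 2 = hs2 X.
Proof. by rewrite /hsnorm sqrtCK hs2E. Qed.

Lemma hs2_ge0 n (X : 'M[C]_n) : 0 <= hs2 X.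
Proof. by rewrite hs2E; apply: sumr_ge0 => i _; apply: sumr_ge0 => j _; apply: exprn_ge0. Qed.

Lemma hsnorm_ge0 n (X : 'M[C]_n) : 0 <= hsnorm X.
Proof. by rewrite /hsnorm sqrtC_ge0 -hs2E hs2_ge0. Qed.

Lemma hsnorm_lt n (X : 'M[C]_n) e : 0 < e -> hs2 X < e ^+ 2 -> hsnorm X < e.
Proof.
move=> e0; rewrite -hsnormE ltr_pXn2r // ?nnegrE ?hsnorm_ge0 // ltW //.
Qed.

Lemma hsnorm_entry n (X : 'M[C]_n) i : `|X i i| <= hsnorm X.
Proof.
rewrite /hsnorm -(sqrCK (normr_ge0 (X i i))) ler_sqrtC ?nnegrE ?exprn_ge0 //; last first.
  by apply: sumr_ge0 => a _; apply: sumr_ge0 => b _; apply: exprn_ge0.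
rewrite (bigD1 i) //= (bigD1 i) //= -addrA lerDl addr_ge0 //.
  by apply: sumr_ge0 => b _; apply: exprn_ge0.
by apply: sumr_ge0 => a _; apply: sumr_ge0 => b _; apply: exprn_ge0.
Qed.

End Misc.


Section Kraus.
Variables (C : archiClosedFieldType) (n k : nat) (M : 'I_k -> 'M[C]_n).
Local Notation D := (kraus_dual M).
Local Notation T := (kraus_op M).

Lemma D_adj A : adjmx A = A -> adjmx (D A) = D A.
Proof.
move=> hA; rewrite /kraus_dual adjmx_sum; apply: eq_bigr => i _.
by rewrite !adjmxM adjmxK hA mulmxA.
Qed.

Lemma D_qf A v : qf (D A) v = \sum_i qf A (M i *m v).
Proof. by rewrite /kraus_dual qf_sum; apply: eq_bigr => i _; rewrite qfM. Qed.

Lemma D_psd A : psd A -> psd (D A).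
Proof.
move=> hA; split; first by apply: D_adj; case: hA.
move=> v; rewrite -/(qf _ _) D_qf; apply: sumr_ge0 => i _; exact: qf_psd.
Qed.

Lemma DD A B : D (A + B) = D A + D B.
Proof. by rewrite /kraus_dual -big_split; apply: eq_bigr => i _; rewrite mulmxDr mulmxDl. Qed.
Lemma DN A : D (- A) = - D A.
Proof. by rewrite /kraus_dual -sumrN; apply: eq_bigr => i _; rewrite mulmxN mulNmx. Qed.
Lemma DB A B : D (A - B) = D A - D B.
Proof. by rewrite DD DN. Qed.
Lemma DZ a A : D (a *: A) = a *: D A.
Proof. by rewrite /kraus_dual scaler_sumr; apply: eq_bigr => i _; rewrite -scalemxAr -scalemxAl. Qed.
Lemma D1 : cptp M -> D 1%:M = 1%:M.
Proof. by move=> h; rewrite /kraus_dual -[RHS]h; apply: eq_bigr => i _; rewrite mulmx1. Qed.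

Lemma iterD_lin m a A B : iter m D (a *: A + B) = a *: iter m D A + iter m D B.
Proof. by elim: m => //= m ->; rewrite DD DZ. Qed.

Lemma T_psd rho : psd rho -> psd (T rho).
Proof.
case=> h1 h2; split.
  rewrite /kraus_op adjmx_sum; apply: eq_bigr => i _.
  by rewrite !adjmxM adjmxK h1 mulmxA.
move=> v; rewrite -/(qf _ _) /kraus_op qf_sum; apply: sumr_ge0 => i _.
by rewrite -{1}[M i]adjmxK qfM; apply: h2.
Qed.

Lemma T_tr rho : cptp M -> \tr (T rho) = \tr rho.
Proof.
move=> h; transitivity (\tr ((\sum_i adjmx (M i) *m M i) *m rho)); last first.
  by rewrite h mul1mx.
rewrite /kraus_op mulmx_suml !raddf_sum; apply: eq_bigr => i _ /=.
by rewrite mxtrace_mulC mulmxA.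
Qed.

Lemma dual1 A rho : \tr (A *m T rho) = \tr (D A *m rho).
Proof.
rewrite /kraus_op /kraus_dual mulmx_sumr mulmx_suml !raddf_sum /=; apply: eq_bigr => i _.
by rewrite !mulmxA mxtrace_mulC !mulmxA.
Qed.

Lemma dualn m A rho : \tr (A *m iter m T rho) = \tr (iter m D A *m rho).
Proof.
elim: m A => //= m IH A; rewrite dual1 IH; congr (\tr (_ *m _)).
by rewrite -iterSr.
Qed.

Lemma iterT_psd m rho : psd rho -> psd (iter m T rho).
Proof. by move=> h; elim: m => //= m; apply: T_psd. Qed.
Lemma iterT_tr m rho : cptp M -> \tr (iter m T rho) = \tr rho.
Proof. by move=> h; elim: m => //= m <-; apply: T_tr. Qed.
Lemma iterD_psd m A : psd A -> psd (iter m D A).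
Proof. by move=> h; elim: m => //= m; apply: D_psd. Qed.

Lemma D_ker A (v : 'cV[C]_n) : psd A -> (D A *m v = 0 <-> forall i, A *m (M i *m v) = 0).
Proof.
move=> hA; split => [h i|h].
  apply: psd_ker => //.
  have : qf (D A) v = 0 by rewrite /qf -mulmxA h mulmx0 mxE.
  rewrite D_qf; move/psumr_eq0P; apply => // j _; exact: qf_psd.
rewrite /kraus_dual mulmx_suml; apply: big1 => i _.
by rewrite -!mulmxA h mulmx0.
Qed.

End Kraus.


Section Main.
Variables (C : archiClosedFieldType) (n k : nat) (M : 'I_k -> 'M[C]_n) (S P : 'M[C]_n).
Hypotheses (hc : cptp M) (hP : orth_proj S P) (hinv : invariant_subspace M S).
Local Notation D := (kraus_dual M).
Local Notation T := (kraus_op M).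
Local Notation Q := (1%:M - P).

Lemma mxtrace_sum I (r : seq I) (F : I -> 'M[C]_n) :
  \tr (\sum_(i <- r) F i) = \sum_(i <- r) \tr (F i).
Proof. exact: (big_morph _ (@mxtraceD _ _) (@mxtrace0 _ _)). Qed.

Lemma P_idem : P *m P = P. Proof. by case: hP. Qed.
Lemma P_adj : adjmx P = P. Proof. by case: hP => _ []. Qed.
Lemma PS : (P^T == S)%MS. Proof. by case: hP => _ []. Qed.
Lemma Q_adj : adjmx Q = Q. Proof. by rewrite adjmxB adjmx1 P_adj. Qed.
Lemma PQ : P *m Q = 0. Proof. by rewrite mulmxBr mulmx1 P_idem subrr. Qed.
Lemma QP : Q *m P = 0. Proof. by rewrite mulmxBl mul1mx P_idem subrr. Qed.
Lemma Q_idem : Q *m Q = Q. Proof. by rewrite mulmxBl mul1mx PQ subr0. Qed.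

Lemma proj_psd (X : 'M[C]_n) : adjmx X = X -> X *m X = X -> psd X.
Proof.
move=> h1 h2; split => // v; rewrite -/(qf _ _).
have -> : qf X v = nrm (X *m v) by rewrite /nrm adjmxM h1 -mulmxA (mulmxA X) h2 mulmxA.
exact: nrm_ge0.
Qed.
Lemma P_psd : psd P. Proof. exact: proj_psd P_adj P_idem. Qed.
Lemma Q_psd : psd Q. Proof. exact: proj_psd Q_adj Q_idem. Qed.

Lemma supp_sub (X : 'M[C]_n) : adjmx X = X -> (supp X <= S)%MS = (P *m X == X).
Proof.
move=> hX; rewrite (suppH hX) -(eqmxP PS) sub_proj; last by rewrite -trmx_mul P_idem.
by rewrite -trmx_mul (inj_eq (@trmx_inj _ _ _)).
Qed.

Lemma mx0_col (A : 'M[C]_n) : (forall x : 'cV[C]_n, A *m x = 0) -> A = 0.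
Proof.
move=> H; apply/matrixP => a b; have := H (delta_mx b 0).
by rewrite -colE => /matrixP/(_ a 0); rewrite !mxE.
Qed.

Lemma QMP i : Q *m M i *m P = 0.
Proof.
apply: mx0_col => x; rewrite -mulmxA.
set w := P *m x; set rho := w *m adjmx w.
have hr : psd rho.
  split; first by rewrite /rho adjmxM adjmxK.
  move=> v; rewrite -/(qf _ _).
  have -> : qf rho v = nrm (adjmx w *m v) by rewrite /qf /nrm /rho adjmxM adjmxK !mulmxA.
  exact: nrm_ge0.
have hrS : (supp rho <= S)%MS.
  by rewrite supp_sub ?(proj1 hr) // /rho /w !mulmxA P_idem.
have := hinv hr hrS; rewrite supp_sub; last by case: (T_psd M hr).
move/eqP => ePT.
have QT : Q *m T rho = 0 by rewrite mulmxBl mul1mx ePT subrr.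
have : \tr (Q *m T rho *m Q) = \sum_j nrm (Q *m M j *m w).
  rewrite /kraus_op mulmx_sumr mulmx_suml mxtrace_sum; apply: eq_bigr => j _.
  rewrite /nrm -trace_mx11 [RHS]mxtrace_mulC; apply: (congr1 mxtrace).
  by rewrite /rho /w !adjmxM Q_adj !mulmxA.
rewrite QT mul0mx mxtrace0 => /esym/psumr_eq0P H0.
have := H0 (fun j _ => nrm_ge0 _) i isT; rewrite -mulmxA; apply: nrm_eq0.
Qed.

Lemma MP i : M i *m P = P *m M i *m P.
Proof.
have := QMP i; rewrite !mulmxBl mul1mx => /eqP; rewrite subr_eq0 => /eqP.
by [].
Qed.

Lemma ker_base (v : 'cV[C]_n) : D P *m v = 0 -> P *m v = 0.
Proof.
move/(D_ker _ _ P_psd) => h.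
have Mv i : M i *m v = Q *m (M i *m v) by rewrite mulmxBl mul1mx h subr0.
have E i : P *m adjmx (M i) *m Q = 0.
  by have := congr1 (@adjmx C n n) (QMP i); rewrite !adjmxM Q_adj P_adj adjmx0 mulmxA.
rewrite -[v]mul1mx -hc mulmx_suml mulmx_sumr; apply: big1 => i _.
by rewrite -mulmxA Mv !mulmxA E !mul0mx.
Qed.

Local Notation Am m := (iter m D P).

Lemma Am_psd m : psd (Am m). Proof. exact: iterD_psd P_psd. Qed.
Lemma Am_adj m : adjmx (Am m) = Am m. Proof. by case: (Am_psd m). Qed.

Lemma kmono m (v : 'cV[C]_n) : Am m.+1 *m v = 0 -> Am m *m v = 0.
Proof.
elim: m v => [|m IH] v; first exact: ker_base.
rewrite [iter m.+2 _ _]/= => /(D_ker _ _ (Am_psd m.+1)) h.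
by apply/(D_ker _ _ (Am_psd m)) => i; apply: IH; apply: h.
Qed.

Lemma kstep m : (forall v : 'cV[C]_n, Am m *m v = 0 -> Am m.+1 *m v = 0) ->
  (forall v : 'cV[C]_n, Am m.+1 *m v = 0 -> Am m.+2 *m v = 0).
Proof.
move=> H v; rewrite [iter m.+1 _ _]/= => /(D_ker _ _ (Am_psd m)) h.
by apply/(D_ker _ _ (Am_psd m.+1)) => i; apply: H; apply: h.
Qed.

Lemma kstat m : (forall v : 'cV[C]_n, Am m *m v = 0 -> Am m.+1 *m v = 0) ->
  forall j (v : 'cV[C]_n), Am m *m v = 0 -> Am (j + m) *m v = 0.
Proof.
move=> H; suff: forall j, (forall v : 'cV[C]_n, Am (j + m) *m v = 0 -> Am (j + m).+1 *m v = 0) /\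
  (forall v : 'cV[C]_n, Am m *m v = 0 -> Am (j + m) *m v = 0) by move=> h j; case: (h j).
elim=> [|j [IH1 IH2]]; first by split.
split; first exact: kstep.
by move=> v /IH2 /IH1.
Qed.

Lemma kchain j m (v : 'cV[C]_n) : (j <= m)%N -> Am m *m v = 0 -> Am j *m v = 0.
Proof.
move=> /subnK <-; elim: (m - j)%N => // d IH; rewrite addSn => /kmono; exact: IH.
Qed.

Local Notation r m := (\rank (Am m)).

Lemma supp_mono m : (supp (Am m) <= supp (Am m.+1))%MS.
Proof. apply: supp_le => v; exact: kmono. Qed.

Lemma r_mono m : (r m <= r m.+1)%N.
Proof. by rewrite -(rank_supp (Am m)) -(rank_supp (Am m.+1)) mxrankS // supp_mono. Qed.

Lemma r_mono_le j m : (j <= m)%N -> (r j <= r m)%N.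
Proof.
move=> /subnK <-; elim: (m - j)%N => // d IH; rewrite addSn; exact: leq_trans IH (r_mono _).
Qed.

Lemma r_stat m : r m = r m.+1 -> forall j, r (j + m) = r m.
Proof.
move=> E.
have H : forall v : 'cV[C]_n, Am m *m v = 0 -> Am m.+1 *m v = 0.
  move=> v; apply: ker_le.
  have := (mxrank_leqif_eq (supp_mono m)).2; rewrite !rank_supp E eqxx => /esym/eqmxP h.
  by rewrite h.
move=> j; apply/eqP; rewrite eqn_leq (r_mono_le (leq_addl j m)) andbT.
rewrite -(rank_supp (Am m)) -(rank_supp (Am (j + m))) mxrankS // supp_le // => v; exact: kstat.
Qed.

Lemma r_le_n m : (r m <= n)%N. Proof. exact: rank_leq_row. Qed.

Lemma rhs_iff :
  (exists N : nat,
     (forall m : nat, (m < N)%N -> (supp (Am m) < supp (Am m.+1))%MS) /\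
     (supp (Am N) == 1%:M)%MS) <-> exists N, r N = n.
Proof.
split=> [[N [_ h]]|HN]; first by exists N; apply/eqP; rewrite -full_supp.
have HN' : exists N, r N == n by case: HN => N hN; exists N; rewrite hN.
exists (ex_minn HN').
case: ex_minnP => N.
move=> /eqP rN Hmin.
split; last by rewrite full_supp rN.
move=> m ltmN; rewrite ltmxErank supp_mono /= !rank_supp ltn_neqAle r_mono andbT.
apply/eqP=> E; have := r_stat E (N - m); rewrite subnK ?(ltnW ltmN) // rN => /esym/eqP.
by move/Hmin; rewrite leqNgt ltmN.
Qed.


Lemma hs_bound (sg : 'M[C]_n) : psd sg -> \tr sg = 1 ->
  hs2 (sg - P *m sg *m P) <= 2%:R * \tr (Q *m sg).
Proof.
move=> hs trs; have sadj : adjmx sg = sg by case: hs.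
set Y := sg *m Q.
have YP : Y *m P = 0 by rewrite /Y -mulmxA QP mulmx0.
have PYt : P *m adjmx Y = 0 by rewrite /Y adjmxM Q_adj mulmxA PQ mul0mx.
have XE : sg - P *m sg *m P = adjmx Y + P *m Y.
  rewrite /Y adjmxM Q_adj sadj mulmxBl mulmxBr mul1mx mulmx1 [P *m (_ - _)]mulmxBr mulmxA.
  by rewrite addrA subrK.
have AE : adjmx (sg - P *m sg *m P) *m (sg - P *m sg *m P) = Y *m adjmx Y + adjmx Y *m P *m Y.
  rewrite XE adjmxD adjmxK adjmxM P_adj mulmxDl !mulmxDr.
  rewrite mulmxA YP mul0mx addr0 -!mulmxA PYt !mulmx0 add0r.
  by rewrite (mulmxA P) P_idem.
have tYQ : 0 <= \tr (adjmx Y *m Q *m Y).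
  by rewrite trace_col; apply: sumr_ge0 => j _; apply: qf_psd Q_psd.
have E2 : \tr (adjmx Y *m P *m Y) = \tr (adjmx Y *m Y) - \tr (adjmx Y *m Q *m Y).
  by rewrite mulmxBr mulmx1 mulmxBl raddfB /= opprB addrC subrK.
rewrite /hs2 AE mxtraceD mxtrace_mulC E2.
have E3 : \tr (adjmx Y *m Y) <= \tr (Q *m sg).
  have -> : adjmx Y *m Y = adjmx Y *m 1%:M *m Y by rewrite mulmx1.
  rewrite trace_col.
  have -> : \tr (Q *m sg) = \tr (adjmx Q *m sg *m Q).
    by rewrite Q_adj [RHS]mxtrace_mulC mulmxA Q_idem.
  rewrite trace_col; apply: ler_sum => j _; rewrite qf1 /Y -mulmxA.
  by have := psd_upper2 (Q *m delta_mx j 0) hs; rewrite trs mul1r.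
apply: le_trans (_ : _ <= \tr (adjmx Y *m Y) + \tr (adjmx Y *m Y)) _.
  by rewrite lerD2l lerBlDr lerDl.
by rewrite mulr_natl mulr2n lerD.
Qed.

Lemma nrm_delta (i : 'I_n) : nrm (delta_mx i 0 : 'cV[C]_n) = 1.
Proof.
by rewrite nrmE (bigD1 i) //= big1 ?addr0 => [|j /negbTE hij]; rewrite mxE ?eqxx ?hij ?normr1 ?normr0 ?expr1n // expr0n.
Qed.

Local Notation Qm m := (iter m D Q).

Lemma QmE m : Qm m = 1%:M - Am m.
Proof. by elim: m => //= m ->; rewrite DB (D1 hc). Qed.
Lemma Qm_psd m : psd (Qm m). Proof. exact: iterD_psd Q_psd. Qed.
Lemma Qm_adj m : adjmx (Qm m) = Qm m. Proof. by case: (Qm_psd m). Qed.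
Lemma QmP m : Qm m *m P = 0.
Proof.
elim: m => [|m IH]; first exact: QP.
rewrite [iter _ _ _]/= /kraus_dual mulmx_suml; apply: big1 => i _.
by rewrite -mulmxA MP !mulmxA -(mulmxA _ (Qm m) P) IH mulmx0 !mul0mx.
Qed.

Lemma iter_mono (X Y : 'M[C]_n) : (forall v, qf X v <= qf Y v) ->
  forall m v, qf (iter m D X) v <= qf (iter m D Y) v.
Proof.
move=> H; elim=> //= m IH v; rewrite !D_qf; apply: ler_sum => i _; exact: IH.
Qed.

Lemma iterZ m a (X : 'M[C]_n) : iter m D (a *: X) = a *: iter m D X.
Proof. by elim: m => //= m ->; rewrite DZ. Qed.

Lemma Qm_le1 m v : qf (Qm m) v <= nrm v.
Proof. by rewrite QmE qfB qf1 lerBlDr lerDl (qf_psd _ (Am_psd m)). Qed.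

Lemma GAS_back : (exists N, r N = n) -> GAS M P.
Proof.
case=> N rN.
case: (posnP n) => [n0|npos].
  move=> rho _ eps e0; exists 0%N => m _.
  rewrite /hsnorm big1 ?sqrtC0 // => i _.
  by exfalso; case: i => i /=; rewrite n0.
have Au : Am N \in unitmx by rewrite -row_full_unit /row_full rN.
have [c [c0 hcl]] := psd_lower (Am_psd N) Au.
have c1 : c <= 1.
  pose e := (delta_mx (Ordinal npos) 0 : 'cV[C]_n).
  have := hcl e; rewrite nrm_delta mulr1 => h; apply: le_trans h _.
  have := qf_psd e (Qm_psd N); rewrite QmE qfB qf1 nrm_delta subr_ge0 //.
have key1 v : qf (Qm N) v <= (1 - c) * qf Q v.
  have XE : Qm N = adjmx Q *m Qm N *m Q.
    have h1 : Qm N *m Q = Qm N by rewrite mulmxBr mulmx1 QmP subr0.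
    rewrite -mulmxA h1 -{2}(Qm_adj N) -adjmxM h1 Qm_adj //.
  rewrite XE qfM QmE qfB qf1.
  have -> : qf Q v = nrm (Q *m v) by rewrite -qf1 -qfM mulmx1 Q_adj Q_idem.
  by rewrite mulrBl mul1r; apply: lerB => //; exact: hcl.
have key2 m v : qf (Qm (m + N)) v <= (1 - c) * qf (Qm m) v.
  rewrite iterD -qfZ -iterZ; apply: iter_mono => u; rewrite qfZ; exact: key1.
have key3 j m v : qf (Qm (m + j * N)) v <= (1 - c) ^+ j * qf (Qm m) v.
  elim: j m v => [|j IH] m v; first by rewrite mul0n addn0 expr0 mul1r.
  rewrite mulSn addnCA addnC; apply: le_trans (key2 _ _) _.
  rewrite exprS -mulrA; apply: ler_wpM2l; [by rewrite subr_ge0 | exact: IH].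
have bound j m v : (j * N <= m)%N -> qf (Qm m) v <= (1 - c) ^+ j * nrm v.
  move=> /subnK <-; apply: le_trans (key3 _ _ _) _; apply: ler_wpM2l.
    by rewrite exprn_ge0 // subr_ge0.
  exact: Qm_le1.
move=> rho [hr trr] eps e0.
have e20 : 0 < eps ^+ 2 / 2%:R by rewrite divr_gt0 // exprn_gt0.
have [j hj] := geom_small c0 c1 e20.
exists (j * N)%N => m hm.
have hs : psd (iter m T rho) := iterT_psd M m hr.
have ts : \tr (iter m T rho) = 1 by rewrite iterT_tr.
apply: hsnorm_lt => //.
apply: le_lt_trans (hs_bound hs ts) _.
have trQ : \tr (Q *m iter m T rho) <= (1 - c) ^+ j.
  rewrite dualn; have := psd_tr hr (bound j m ^~ hm); rewrite trr mulr1; exact.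
apply: le_lt_trans (_ : _ <= 2%:R * (1 - c) ^+ j) _.
  by apply: ler_wpM2l.
by move: hj; rewrite ltr_pdivlMr ?ltr0n // mulrC.
Qed.

Lemma GAS_imp : GAS M P -> exists N, r N = n.
Proof.
move=> hG.
case: (boolP [exists N : 'I_n.+1, r N == n]) => [/existsP [N /eqP rN]|/existsPn H]; first by exists N.
have rlt (N : 'I_n.+1) : (r N < n)%N by rewrite ltn_neqAle H r_le_n.
have [m0 [m0n Em0]] : exists m0, (m0 < n)%N /\ r m0 = r m0.+1.
  case: (boolP [exists m : 'I_n, r m == r m.+1]) => [/existsP [m /eqP E]|/existsPn H2].
    by exists m.
  exfalso.
  have H3 j : (j <= n)%N -> (j <= r j)%N.
    elim: j => // j IH ltjn.
    have ne := H2 (Ordinal ltjn).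
    have h2 : (r j < r j.+1)%N by rewrite ltn_neqAle ne r_mono.
    exact: leq_ltn_trans (IH (ltnW ltjn)) h2.
  by have := rlt ord_max; rewrite /= ltnNge H3.
have rm0 : (r m0 < n)%N := rlt (@Ordinal n.+1 m0 (ltnW m0n)).
have npos : (0 < n)%N := leq_ltn_trans (leq0n m0) m0n.
have : kermx (Am m0)^T != 0.
  by rewrite -mxrank_eq0 mxrank_ker mxrank_tr subn_eq0 -ltnNge.
case/rowV0Pn => u uK u0.
pose w := u^T.
have hw0 : Am m0 *m w = 0.
  by move: uK; rewrite sub_kermx => /eqP/(congr1 trmx); rewrite trmx_mul trmxK trmx0.
have Hst : forall v : 'cV[C]_n, Am m0 *m v = 0 -> Am m0.+1 *m v = 0.
  move=> v; apply: ker_le.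
  have := (mxrank_leqif_eq (supp_mono m0)).2; rewrite !rank_supp Em0 eqxx => /esym/eqmxP h.
  by rewrite h.
have hall j : Am j *m w = 0.
  case: (leqP j m0) => hj; first exact: kchain hj hw0.
  by rewrite -(subnK (ltnW hj)); apply: kstat Hst _ _ hw0.
have wn0 : w != 0.
  by apply: contraNneq u0 => h; rewrite -[u]trmxK -/w h trmx0.
have nw : nrm w != 0 by apply: contra wn0 => /eqP /nrm_eq0 ->.
pose rho := (nrm w)^-1 *: (w *m adjmx w).
have trw : \tr (w *m adjmx w) = nrm w by rewrite mxtrace_mulC trace_mx11.
have dens : density rho.
  split; last by rewrite /rho linearZ /= trw mulVf.
  split; first by rewrite /rho adjmxZ adjmxM adjmxK geC0_conj // invr_ge0 nrm_ge0.
  move=> v; rewrite -/(qf _ _) /rho qfZ; apply: mulr_ge0; first by rewrite invr_ge0 nrm_ge0.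
  have -> : qf (w *m adjmx w) v = nrm (adjmx w *m v) by rewrite /qf /nrm adjmxM adjmxK !mulmxA.
  exact: nrm_ge0.
have npos' : (0 : C) < n%:R by rewrite ltr0n.
have epos : 0 < (n%:R : C)^-1 by rewrite invr_gt0.
have [N HN] := hG rho dens _ epos.
have := HN N (leqnn N).
set sg := iter N T rho.
have hs : psd sg := iterT_psd M N (proj1 dens).
have ts : \tr sg = 1 by rewrite iterT_tr // (proj2 dens).
have tPs : \tr (P *m sg) = 0.
  by rewrite /sg dualn /rho -scalemxAr linearZ /= mulmxA hall mul0mx mxtrace0 mulr0.
have sP : sg *m P = 0.
  have h : \tr (adjmx P *m sg *m P) = 0 by rewrite P_adj mxtrace_mulC mulmxA P_idem tPs.
  rewrite trace_col in h.
  have h2 := psumr_eq0P (fun j _ => qf_psd _ hs) h.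
  apply/matrixP => a b; have := psd_ker hs (h2 b isT).
  by rewrite mulmxA -colE => /matrixP/(_ a 0); rewrite !mxE.
rewrite -mulmxA sP mulmx0 subr0 => hlt.
have : `|\tr sg| <= n%:R * hsnorm sg.
  rewrite /mxtrace; apply: le_trans (ler_norm_sum _ _ _) _.
  have -> : n%:R * hsnorm sg = \sum_(i < n) hsnorm sg by rewrite sumr_const card_ord mulr_natl.
  by apply: ler_sum => i _; exact: hsnorm_entry.
rewrite ts normr1 => h1.
have : n%:R * hsnorm sg < 1.
  by move: hlt; rewrite -(ltr_pM2l npos') mulfV // pnatr_eq0 -lt0n npos.
by move/(le_lt_trans h1); rewrite ltxx.
Qed.

End Main.


Theorem corollary2 (C : archiClosedFieldType) (n k : nat)
  (M : 'I_k -> 'M[C]_n) (S P : 'M[C]_n) :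
  cptp M -> orth_proj S P -> invariant_subspace M S ->
  (GAS M P <->
   exists N : nat,
     (forall m : nat, (m < N)%N ->
        (supp (iter m (kraus_dual M) P) < supp (iter m.+1 (kraus_dual M) P))%MS) /\
     (supp (iter N (kraus_dual M) P) == 1%:M)%MS).
Proof.
move=> hc hP hinv; have [h1 h2] := rhs_iff hc hP hinv.
split => [hG | hR]; first exact: h2 (GAS_imp hc hP hinv hG).
exact: GAS_back hc hP hinv (h1 hR).
Qed.
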